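(* Let $\mathbf w$ be a colored involution, and for integers $i,j$ let $a_i$ be the number of biletters $\binom{i}{i}$, $b_i$ the number of biletters $\binom{i}{\bar i}$, and, for $i\ne j$, $c_{ij}$ the number of biletters $\binom{i}{j}$ and $d_{ij}$ the number of biletters $\binom{i}{\bar j}$ in $\mathbf w$ (so $c_{ij}=c_{ji}$, $d_{ij}=d_{ji}$). Then the bottom row of $\mathbf w^{st}$ is an involution in $B_n$ with $a$ fixed points, $b$ barred fixed points, $c$ two-cycles and $d$ barred two-cycles, where \[ a=\sum_i a_i,\quad b=\sum_i\Big(b_i-2\Big\lfloor\frac{b_i}{2}\Big\rfloor\Big),\quad c=\sum_{i<j}c_{ij},\quad d=\sum_{i<j}d_{ij}+\sum_i\Big\lfloor\frac{b_i}{2}\Big\rfloor. \]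
   Context: Letters are positive integers, possibly barred; for a letter $y$, $y^{neg}$ is $y$ if unbarred and $-m$ if $y=\bar m$; $|y|$ is the underlying integer. A biletter is a pair $\binom{x}{y}$ of letters. A doubly colored biword is a finite sequence of biletters in canonical order: $\binom{x}{y}$ precedes $\binom{k}{l}$ iff $|x|<|k|$, or $|x|=|k|$ with $x$ barred and $k$ unbarred, or $x=k$ both unbarred and $y^{neg}<l^{neg}$, or $x=k$ both barred and $l^{neg}<y^{neg}$. A colored biword is a doubly colored biword whose top letters are all unbarred; $n$ denotes its length. Operations: $\mathbf w^{\overline{st}}$ replaces the top letters, read left to right, by $1,2,\dots$ keeping their bars; $\mathbf w^{inv}$ swaps the two letters of each biletter (bars travel with letters) and reorders canonically; for a colored biword, $\mathbf w^{inv_r}$ replaces each biletter $\binom{x}{y}$ by $\binom{|y|}{x'}$ where $x'$ is $x$ barred iff $y$ is barred, and reorders canonically. $\mathbf w$ is a colored involution if $\mathbf w^{inv_r}=\mathbf w$. The standardisation is $\mathbf w^{st}=(((\mathbf w^{\overline{st}})^{inv})^{\overline{st}})^{inv}$; it has top row $1,\dots,n$ and bottom row a word $\pi$ in letters $\{1,\dots,n,\bar1,\dots,\bar n\}$ using each $k\in[n]$ exactly once (an element of $B_n$). Such $\pi$ is an involution if for each $k$: $\pi_k=k$ (fixed point), $\pi_k=\bar k$ (barred fixed point), or for some $l\ne k$, $\pi_k=l,\pi_l=k$ (two-cycle) or $\pi_k=\bar l,\pi_l=\bar k$ (barred two-cycle). *)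

(* Defs.v *)
From mathcomp Require Import all_boot all_order all_algebra.
Set Implicit Arguments. Unset Strict Implicit. Unset Printing Implicit Defensive.

(* A letter is a pair (m, barred): the integer m (required positive where
   relevant) together with a flag telling whether it is barred. *)
Definition letter := (nat * bool)%type.
Definition biletter := (letter * letter)%type.   (* (top, bottom) *)

Definition lneg (y : letter) : int := if y.2 then (- (y.1 : int))%R else (y.1 : int).

Definition canon_lt (b1 b2 : biletter) : bool :=
  let: (x, y) := b1 in let: (k, l) := b2 in
  [|| x.1 < k.1,
      (x.1 == k.1) && x.2 && ~~ k.2,
      (x == k) && ~~ x.2 && ~~ k.2 && (lneg y < lneg l)%R
    | (x == k) && x.2 && k.2 && (lneg l < lneg y)%R ].

Definition canon_le (b1 b2 : biletter) : bool := (b1 == b2) || canon_lt b1 b2.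

Definition canon (w : seq biletter) : seq biletter := sort canon_le w.

Definition pos_biword (w : seq biletter) : bool :=
  all (fun b => (0 < b.1.1) && (0 < b.2.1)) w.

Definition dcbiword (w : seq biletter) : bool := pos_biword w && sorted canon_le w.

Definition cbiword (w : seq biletter) : bool := dcbiword w && all (fun b => ~~ b.1.2) w.

Definition stbar (w : seq biletter) : seq biletter :=
  [seq ((p.1.+1, p.2.1.2), p.2.2) | p <- zip (iota 0 (size w)) w].

Definition binv (w : seq biletter) : seq biletter := canon [seq (b.2, b.1) | b <- w].

Definition binv_r (w : seq biletter) : seq biletter :=
  canon [seq ((b.2.1, false), (b.1.1, b.2.2)) | b <- w].

Definition colored_involution (w : seq biletter) : bool := cbiword w && (binv_r w == w).

Definition bst (w : seq biletter) : seq biletter := binv (stbar (binv (stbar w))).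

Definition bottom_row (w : seq biletter) : seq letter := [seq b.2 | b <- w].

(* pi_k, 1-based *)
Definition pi_at (pi : seq letter) (k : nat) : letter := nth (0, false) pi k.-1.

Definition in_Bn (n : nat) (pi : seq letter) : bool :=
  perm_eq [seq y.1 | y <- pi] (iota 1 n).

Definition is_fixed (pi : seq letter) k := pi_at pi k == (k, false).
Definition is_bfixed (pi : seq letter) k := pi_at pi k == (k, true).
Definition is_2cycle (pi : seq letter) k l :=
  (pi_at pi k == (l, false)) && (pi_at pi l == (k, false)).
Definition is_b2cycle (pi : seq letter) k l :=
  (pi_at pi k == (l, true)) && (pi_at pi l == (k, true)).

Definition is_involution (n : nat) (pi : seq letter) : Prop :=
  forall k, 1 <= k <= n ->
    [\/ is_fixed pi k, is_bfixed pi k,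
        exists2 l, (1 <= l <= n) && (l != k) & is_2cycle pi k l
      | exists2 l, (1 <= l <= n) && (l != k) & is_b2cycle pi k l].

Definition n_fixed n pi := \sum_(1 <= k < n.+1) is_fixed pi k.
Definition n_bfixed n pi := \sum_(1 <= k < n.+1) is_bfixed pi k.
Definition n_2cycles n pi := \sum_(1 <= k < n.+1) \sum_(k.+1 <= l < n.+1) is_2cycle pi k l.
Definition n_b2cycles n pi := \sum_(1 <= k < n.+1) \sum_(k.+1 <= l < n.+1) is_b2cycle pi k l.

Definition mult (w : seq biletter) (b : biletter) : nat := count_mem b w.
Definition a_ (w : seq biletter) i := mult w ((i, false), (i, false)).
Definition b_ (w : seq biletter) i := mult w ((i, false), (i, true)).
Definition c_ (w : seq biletter) i j := mult w ((i, false), (j, false)).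
Definition d_ (w : seq biletter) i j := mult w ((i, false), (j, true)).

(* a bound exceeding every integer occurring in w; indices i >= bnd w
   contribute 0 to all the sums below *)
Definition bnd (w : seq biletter) : nat := (\max_(b <- w) maxn b.1.1 b.2.1).+1.

(* Main.v *)
Require Import Defs.
From mathcomp Require Import all_boot all_order all_algebra.
From mathcomp Require Import zify.

Definition dflt : biletter := ((0,false),(0,false)).
Definition fr (b : biletter) : biletter := ((b.2.1,false),(b.1.1,b.2.2)).
Definition posb (b : biletter) := (0 < b.1.1) && (0 < b.2.1).

Lemma canon_ltE x1 x2 y1 y2 k1 k2 l1 l2 :
  canon_lt ((x1,x2),(y1,y2)) ((k1,k2),(l1,l2)) =
  [|| x1 < k1, (x1 == k1) && x2 && ~~ k2,
      (x1 == k1) && ~~ x2 && ~~ k2 && (lneg (y1,y2) < lneg (l1,l2))%R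
    | (x1 == k1) && x2 && k2 && (lneg (l1,l2) < lneg (y1,y2))%R ].
Proof. rewrite /canon_lt xpair_eqE. by case: x2; case: k2; rewrite ?andbT ?andbF. Qed.

Lemma canon_lt_trans : transitive canon_lt.
Proof.
move=> [[a1 a2] [b1 b2]] [[c1 c2] [d1 d2]] [[e1 e2] [f1 f2]].
rewrite !canon_ltE /lneg /=.
case: a2; case: c2; case: e2; case: b2; case: d2; case: f2 => /=; lia.
Qed.

Lemma canon_lt_irr b : canon_lt b b = false.
Proof. move: b => [[a1 a2] [b1 b2]]; rewrite canon_ltE /lneg /=.
case: a2; case: b2 => /=; lia. Qed.

Lemma canon_lt_asym a b : canon_lt a b -> canon_lt b a = false.
Proof.
move=> ab; apply/negbTE/negP => ba.
by have := @canon_lt_trans b a a ab ba; rewrite canon_lt_irr.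
Qed.

Lemma canon_le_trans : transitive canon_le.
Proof.
move=> b a c; rewrite /canon_le => /orP[/eqP->//|ab] /orP[/eqP<-|bc].
  by rewrite ab orbT.
by rewrite (@canon_lt_trans b a c ab bc) orbT.
Qed.

Lemma canon_le_anti : antisymmetric canon_le.
Proof.
move=> a b /andP[]; rewrite /canon_le => /orP[/eqP->//|ab] /orP[/eqP->//|ba].
by rewrite (@canon_lt_asym a b ab) in ba.
Qed.

Lemma canon_le_ltF a b : canon_le a b -> canon_lt b a = false.
Proof. by case/orP=> [/eqP->|/canon_lt_asym]//; rewrite canon_lt_irr. Qed.

Lemma canon_le_lt a b : canon_le a b -> canon_lt a b = (a != b).
Proof.
case/orP=> [/eqP->|ab]; first by rewrite canon_lt_irr eqxx.
by rewrite ab; apply/esym/negP=> /eqP eab; rewrite eab canon_lt_irr in ab.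
Qed.

Lemma canon_total {a b} : posb a -> posb b -> [|| a == b, canon_lt a b | canon_lt b a].
Proof.
move: a b => [[a1 a2][b1 b2]] [[c1 c2][d1 d2]]; rewrite /posb !canon_ltE /lneg !xpair_eqE /=.
case: a2; case: b2; case: c2; case: d2 => /=; lia.
Qed.

Lemma canon_le_total_pos : {in posb &, total canon_le}.
Proof.
move=> a b pa pb; rewrite /canon_le; have := canon_total pa pb.
by case/or3P=> ->; rewrite ?orbT // eq_sym => ->.
Qed.

Lemma index_count s x : sorted canon_le s -> uniq s -> x \in s ->
  index x s = count (canon_lt^~ x) s.
Proof.
elim: s => [//|a s IH] /= Hs /andP[anot Hu] Hx.
have Hall := order_path_min canon_le_trans Hs.
have Hs' := path_sorted Hs.
case: eqP => [eax|neax].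
  subst x; rewrite canon_lt_irr add0n; apply/esym/eqP; rewrite eqn0Ngt -has_count.
  apply/hasPn => b bs /=; rewrite canon_le_ltF //; exact: (allP Hall).
have xs : x \in s by move: Hx; rewrite inE => /orP[/eqP xa|//]; case: neax.
rewrite IH // canon_le_lt ?(allP Hall) //; by case: eqP.
Qed.

Lemma count_split3 (T : eqType) (a b c : pred T) s :
  (forall x, x \in s -> (a x : nat) = b x + c x) -> count a s = count b s + count c s.
Proof.
elim: s => //= y s IH H; rewrite H ?inE ?eqxx // IH => [|x xs]; last by rewrite H // inE xs orbT.
lia.
Qed.

Lemma count_le3 (T : eqType) (a b c : pred T) s :
  (forall x, x \in s -> (a x : nat) + b x <= c x) -> count a s + count b s <= count c s.
Proof.
elim: s => //= y s IH H; have := H y; rewrite inE eqxx => /(_ isT).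
have : count a s + count b s <= count c s by apply: IH => x xs; rewrite H // inE xs orbT.
lia.
Qed.

Lemma count_lt c m : count (fun r => r < c) (iota 0 m) = minn c m.
Proof.
elim: m => [|m IH]; first by rewrite minn0.
by rewrite -addn1 iotaD count_cat IH /= add0n; lia.
Qed.

Lemma sum_eq1 m N x (F : nat -> nat) : (forall i, F i != 0 -> i = x) ->
  \sum_(m <= i < N) F i = if m <= x < N then F x else 0.
Proof.
move=> H; rewrite -(@big_nat1_eq nat 0 addn F x m N) (big_mkcond (fun j => j == x)) /=.
apply: eq_bigr => i _; case: eqP => [->//|ne].
by case: (F i =P 0) => // /eqP /H.
Qed.

Lemma sum_count (T : Type) (s : seq T) (P : pred T) :
  \sum_(x <- s) (P x : nat) = count P s.
Proof. by elim: s => [|y s IH]; rewrite ?big_nil ?big_cons ?IH. Qed.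
Set Implicit Arguments. Unset Strict Implicit.

Lemma ltT a b c : canon_lt a b -> canon_lt b c -> canon_lt a c.
Proof. exact: canon_lt_trans. Qed.

Section Main.
Variable w : seq biletter.
Hypothesis Hci : colored_involution w.

Local Notation n := (size w).
Local Notation e := (nth dflt w).

Lemma w_sorted : sorted canon_le w.
Proof. by case/andP: Hci => /andP[/andP[]]. Qed.

Lemma w_all : all (fun b => [&& b.1.2 == false, 0 < b.1.1 & 0 < b.2.1]) w.
Proof.
case/andP: Hci => /andP[/andP[Hp _] Ht] _.
apply/allP => b bw; move: (allP Hp b bw) (allP Ht b bw) => /andP[-> ->].
by case: (b.1.2).
Qed.

Lemma w_prop b : b \in w -> [&& b.1.2 == false, 0 < b.1.1 & 0 < b.2.1].
Proof. exact: (allP w_all). Qed.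

Lemma e_in k : k < n -> e k \in w.
Proof. exact: mem_nth. Qed.

Lemma e_prop k : k < n -> [&& (e k).1.2 == false, 0 < (e k).1.1 & 0 < (e k).2.1].
Proof. by move=> /e_in /w_prop. Qed.

Lemma w_perm : perm_eq (map fr w) w.
Proof.
case/andP: Hci => _ /eqP H; rewrite -{2}H /binv_r /canon.
by rewrite perm_sym perm_sort.
Qed.

Lemma countfr P : count P w = count (P \o fr) w.
Proof. by rewrite -(permP w_perm) count_map. Qed.

Lemma count_w P : count P w = count (P \o e) (iota 0 n).
Proof. by rewrite -{1}(mkseq_nth dflt w) /mkseq count_map. Qed.

Lemma le_nth k k' : k < k' -> k' < n -> canon_le (e k) (e k').
Proof.
move=> kk' k'n; apply: (sorted_ltn_nth canon_le_trans dflt w_sorted) => //.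
by rewrite inE (ltn_trans kk').
Qed.

Definition lo x := count (fun b => canon_lt b x) w.
Definition rk k := count (fun k' => (k' < k) && (e k' == e k)) (iota 0 n).
Definition rk2 k := count (fun k' => (k < k') && (e k' == e k)) (iota 0 n).
Definition m x := count_mem x w.

Lemma posA k : k < n -> k = lo (e k) + rk k.
Proof.
move=> kn.
have -> : lo (e k) = count (fun k' => canon_lt (e k') (e k)) (iota 0 n) by rewrite /lo count_w.
rewrite /rk -(@count_split3 _ (fun k' => k' < k)).
  by rewrite count_lt; apply/esym/minn_idPl/ltnW.
move=> k'; rewrite mem_iota add0n => /andP[_ k'n].
case: (ltngtP k' k) => hkk.
- have := le_nth hkk kn; rewrite /canon_le => /orP[/eqP->|lt].
    by rewrite canon_lt_irr eqxx.
  by rewrite lt; case: eqP => // E; rewrite E canon_lt_irr in lt.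
- by rewrite canon_le_ltF // le_nth.
- by subst; rewrite canon_lt_irr.
Qed.

Lemma posB k : k < n -> rk k + rk2 k + 1 = m (e k).
Proof.
move=> kn.
have H1 : count (fun k' => k' == k) (iota 0 n) = 1.
  by have := count_uniq_mem k (iota_uniq 0 n); rewrite mem_iota kn /= => <-.
rewrite /m count_w /rk /rk2 -H1.
rewrite (@count_split3 _ (fun k' => e k' == e k) (fun k' => (k'<k) && (e k' == e k))
   (fun k' => ((k<k') && (e k' == e k)) || (k' == k))); last first.
  move=> k' _ /=; case: (ltngtP k' k) => hkk /=; last subst;
  by rewrite ?addn0 ?orbF ?add0n ?eqxx.
rewrite -addnA; congr (_ + _); symmetry; apply: count_split3 => k' _ /=.
case: (ltngtP k' k) => hkk /=; last subst;
by rewrite ?addn0 ?orbF ?add0n ?eqxx ?ltnn.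
Qed.

Lemma lo_lt x y : canon_lt x y -> lo x + m x <= lo y.
Proof.
move=> xy; apply: count_le3 => b _ /=.
case: eqP => [->|_]; first by rewrite canon_lt_irr xy.
case H: (canon_lt b x) => //=; by rewrite (ltT H xy).
Qed.

Lemma lo_m_le x : lo x + m x <= n.
Proof.
rewrite /lo /m -[n](count_predT w); apply: count_le3 => b _ /=.
by case: eqP => [->|]; rewrite ?canon_lt_irr //; case: canon_lt.
Qed.

Lemma fr_inj_w b x : b \in w -> x.1.2 = false -> (fr b == fr x) = (b == x).
Proof.
move=> /w_prop /andP[/eqP hb _].
move: b x hb => [[a1 a2][b1 b2]] [[c1 c2][d1 d2]] /= -> ->.
rewrite /fr /= !xpair_eqE /=; case: b2; case: d2 => /=; lia.
Qed.

Lemma frK x : x.1.2 = false -> fr (fr x) = x.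
Proof. by move: x => [[a1 a2][b1 b2]] /= ->. Qed.

Lemma m_fr x : x.1.2 = false -> m (fr x) = m x.
Proof.
move=> hx; rewrite /m countfr; apply: eq_in_count => b bw /=.
by rewrite fr_inj_w.
Qed.

Lemma m_pos x : (0 < m x) = (x \in w).
Proof. by rewrite /m -has_pred1 has_count. Qed.

Lemma posE x r : x \in w -> r < m x ->
  [/\ lo x + r < n, e (lo x + r) = x & rk (lo x + r) = r].
Proof.
move=> xw rm.
have qn : lo x + r < n by apply: leq_trans (lo_m_le x); rewrite ltn_add2l.
have zw := e_in qn.
have hA := posA qn; have hB := posB qn.
have px : posb x by rewrite /posb; case/and3P: (w_prop xw) => _ -> ->.
have pz : posb (e (lo x + r)) by rewrite /posb; case/and3P: (w_prop zw) => _ -> ->.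
case/or3P: (canon_total pz px) => [/eqP ez|lt|lt].
- split => //; move: hA; rewrite ez; lia.
- have := lo_lt lt; move: hA hB; lia.
- have := lo_lt lt; move: hA hB; lia.
Qed.

Lemma stbar_mk s : stbar s =
  mkseq (fun k => ((k.+1, (nth dflt s k).1.2), (nth dflt s k).2)) (size s).
Proof.
rewrite /stbar; apply: (@eq_from_nth _ dflt); first by rewrite size_map size_zip size_iota size_mkseq minnn.
move=> i; rewrite size_map size_zip size_iota minnn => hi.
by rewrite (nth_map (0,dflt)) ?size_zip ?size_iota ?minnn // nth_zip ?size_iota // nth_iota // nth_mkseq.
Qed.

Definition X k : biletter := ((e k).2, (k.+1, false)).
Definition s2 := canon (mkseq X n).
Definition sig k := index (X k) s2.

Lemma binv1 : binv (stbar w) = s2.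
Proof.
rewrite /binv stbar_mk /s2; congr canon; rewrite /mkseq -map_comp; apply/eq_in_map => k.
rewrite mem_iota => /andP[_ kn] /=; have := e_prop kn; case/and3P => /eqP -> _ _.
by [].
Qed.

Lemma X_inj : injective X.
Proof. by move=> a b /(congr1 (fun z => z.2.1)) /= []. Qed.

Lemma s2_perm : perm_eq s2 (mkseq X n).
Proof. by rewrite /s2 /canon perm_sort perm_refl. Qed.

Lemma s2_uniq : uniq s2.
Proof. by rewrite (perm_uniq s2_perm) mkseq_uniq //; exact: X_inj. Qed.

Lemma s2_sorted : sorted canon_le s2.
Proof.
apply: (sort_sorted_in canon_le_total_pos).
apply/allP => y /mapP [k]; rewrite mem_iota => /andP[_ kn] ->.
by rewrite /posb /=; case/and3P: (e_prop kn) => _ _ ->.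
Qed.

Lemma size_s2 : size s2 = n.
Proof. by rewrite (perm_size s2_perm) size_mkseq. Qed.

Lemma X_in k : k < n -> X k \in s2.
Proof. by move=> kn; rewrite (perm_mem s2_perm) /mkseq map_f // mem_iota. Qed.

Lemma sig_count k : k < n -> sig k = count (fun k' => canon_lt (X k') (X k)) (iota 0 n).
Proof.
move=> kn; rewrite /sig index_count ?s2_sorted ?s2_uniq ?X_in //.
by rewrite (permP s2_perm) /mkseq count_map.
Qed.

Lemma sig_lt k : k < n -> sig k < n.
Proof. by move=> kn; rewrite /sig -size_s2 index_mem X_in. Qed.

Lemma nth_sig k : k < n -> nth dflt s2 (sig k) = X k.
Proof. by move=> kn; rewrite /sig nth_index // X_in. Qed.

Lemma nth_s2 q : q < n -> exists2 k, k < n & nth dflt s2 q = X k.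
Proof.
move=> qn; have : nth dflt s2 q \in mkseq X n by rewrite -(perm_mem s2_perm) mem_nth ?size_s2.
by case/mapP=> k; rewrite mem_iota => /andP[_ kn] ->; exists k.
Qed.

Definition Z k : biletter := ((k.+1,false), ((sig k).+1, (e k).2.2)).

Lemma bst_eq : bst w = mkseq Z n.
Proof.
rewrite /bst binv1 /binv stbar_mk size_s2 /canon /mkseq -map_comp.
apply: (sorted_eq canon_le_trans canon_le_anti).
- apply: (sort_sorted_in canon_le_total_pos).
  apply/allP => y /mapP [q]; rewrite mem_iota => /andP[_ qn] -> /=.
  by have [k kn ->] := nth_s2 qn.
- rewrite sorted_map; apply: (sub_sorted _ (iota_ltn_sorted 0 n)) => a b ab.
  have ab' : a < b := ab; by rewrite /= /canon_le /Z canon_ltE ltnS ab' orbT.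
rewrite (perm_sort canon_le); apply: uniq_perm.
- rewrite map_inj_in_uniq ?iota_uniq // => a b _ _.
  by move=> /(congr1 (fun z => z.2.1)) /= [].
- rewrite map_inj_uniq ?iota_uniq // => a b.
  by move=> /(congr1 (fun z => z.1.1)) /= [].
move=> y; apply/mapP/mapP => -[q]; rewrite mem_iota => /andP[_ qn] ->.
- have [k kn hk] := nth_s2 qn; exists k; first by rewrite mem_iota kn.
  have hq : sig k = q by rewrite /sig -hk index_uniq ?s2_uniq ?size_s2.
  by rewrite /= hk /Z hq /X /=.
- exists (sig q); first by rewrite mem_iota sig_lt.
  by rewrite /= nth_sig // /X /Z /=.
Qed.

Lemma lo_fr k : lo (fr (e k)) = count (fun k' => canon_lt (fr (e k')) (fr (e k))) (iota 0 n).
Proof. by rewrite /lo countfr count_w. Qed.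

Lemma sigC k : k < n -> (e k).2.2 = false -> sig k = lo (fr (e k)) + rk k.
Proof.
move=> kn Hc; rewrite sig_count // lo_fr /rk; apply: count_split3 => k'.
rewrite mem_iota add0n => /andP[_ k'n].
have hk := e_prop kn; have hk' := e_prop k'n.
case: (ltngtP k' k) => hkk.
- have := le_nth hkk kn; rewrite /X /=.
  move: hk hk' Hc; case: (e k) => [[i c2][j c]]; case: (e k') => [[i' c2'][j' c']] /=.
  rewrite /canon_le /fr !canon_ltE /lneg !xpair_eqE /=.
  case: c2; case: c2'; case: c; case: c' => //=; lia.
- have := le_nth hkk k'n; rewrite /X /=.
  move: hk hk' Hc; case: (e k) => [[i c2][j c]]; case: (e k') => [[i' c2'][j' c']] /=.
  rewrite /canon_le /fr !canon_ltE /lneg !xpair_eqE /=.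
  case: c2; case: c2'; case: c; case: c' => //=; lia.
- by subst k'; rewrite !canon_lt_irr ?ltnn.
Qed.

Lemma sigD k : k < n -> (e k).2.2 = true -> sig k = lo (fr (e k)) + rk2 k.
Proof.
move=> kn Hc; rewrite sig_count // lo_fr /rk2; apply: count_split3 => k'.
rewrite mem_iota add0n => /andP[_ k'n].
have hk := e_prop kn; have hk' := e_prop k'n.
case: (ltngtP k' k) => hkk.
- have := le_nth hkk kn; rewrite /X /=.
  move: hk hk' Hc; case: (e k) => [[i c2][j c]]; case: (e k') => [[i' c2'][j' c']] /=.
  rewrite /canon_le /fr !canon_ltE /lneg !xpair_eqE /=.
  case: c2; case: c2'; case: c; case: c' => //=; lia.
- have := le_nth hkk k'n; rewrite /X /=.
  move: hk hk' Hc; case: (e k) => [[i c2][j c]]; case: (e k') => [[i' c2'][j' c']] /=.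
  rewrite /canon_le /fr !canon_ltE /lneg !xpair_eqE /=.
  case: c2; case: c2'; case: c; case: c' => //=; lia.
- by subst k'; rewrite !canon_lt_irr ?ltnn.
Qed.

Lemma top_false k : k < n -> (e k).1.2 = false.
Proof. by move=> kn; case/and3P: (e_prop kn) => /eqP. Qed.

Lemma e_fr_in k : k < n -> fr (e k) \in w.
Proof. by move=> kn; rewrite -m_pos m_fr ?top_false // m_pos e_in. Qed.

Lemma sig_props k : k < n ->
  [/\ sig k < n, e (sig k) = fr (e k) & rk (sig k) = (if (e k).2.2 then rk2 k else rk k)].
Proof.
move=> kn; have hB := posB kn.
case Hc: (e k).2.2; [rewrite sigD // | rewrite sigC //];
  (apply: posE; [exact: e_fr_in | rewrite m_fr ?top_false //; lia]).
Qed.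

Lemma sig_sig k : k < n -> sig (sig k) = k.
Proof.
move=> kn; have [qn he hr] := sig_props kn.
have hA := posA kn; have hBk := posB kn; have hBq := posB qn.
have hfe : fr (e (sig k)) = e k by rewrite he frK ?top_false.
have hc : (e (sig k)).2.2 = (e k).2.2 by rewrite he.
move: hr hBq; rewrite he m_fr ?top_false //.
case Hc: (e k).2.2 => hr hBq.
- rewrite sigD ?hc // hfe; lia.
- rewrite sigC ?hc // hfe; lia.
Qed.

Lemma sig_fix k : k < n ->
  (sig k == k) = (fr (e k) == e k) && ((e k).2.2 ==> (rk2 k == rk k)).
Proof.
move=> kn; have hA := posA kn; have [_ he _] := sig_props kn.
case Hfe: (fr (e k) == e k); last first.
  by apply/negbTE/eqP => E; move: Hfe; rewrite -he E eqxx.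
move/eqP: Hfe => Hfe /=.
case Hc: (e k).2.2; [rewrite sigD // | rewrite sigC //]; rewrite Hfe /=; apply/eqP/eqP; lia.
Qed.

Lemma sig_gt k : k < n -> (k < sig k) =
  canon_lt (e k) (fr (e k)) || [&& fr (e k) == e k, (e k).2.2 & rk k < rk2 k].
Proof.
move=> kn; have hA := posA kn; have hB := posB kn.
have hm := m_fr (top_false kn).
have pe : posb (e k) by rewrite /posb; case/and3P: (e_prop kn) => _ -> ->.
have pf : posb (fr (e k)) by rewrite /posb; case/and3P: (e_prop kn) => _ -> ->.
have Hs : sig k = lo (fr (e k)) + (if (e k).2.2 then rk2 k else rk k).
  by case Hc: (e k).2.2; [rewrite sigD | rewrite sigC].
case/or3P: (canon_total pe pf) => [/eqP E|lt|lt].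
- rewrite -E canon_lt_irr eqxx /= Hs -E; case: (e k).2.2 => /=; lia.
- rewrite lt /=; have := lo_lt lt; rewrite Hs; case: (e k).2.2; lia.
- rewrite canon_lt_asym //=; have := lo_lt lt; rewrite Hs.
  have -> : (fr (e k) == e k) = false by apply/negbTE/eqP => E; rewrite E canon_lt_irr in lt.
  rewrite hm; case: (e k).2.2; lia.
Qed.

Lemma fr_eqE k : k < n -> (fr (e k) == e k) = ((e k).1.1 == (e k).2.1).
Proof.
move=> kn; have := e_prop kn; case: (e k) => [[i c2][j c]] /=.
rewrite /fr /= !xpair_eqE /=; case: c2; case: c => /=; lia.
Qed.

Lemma lt_frE k : k < n -> canon_lt (e k) (fr (e k)) = ((e k).1.1 < (e k).2.1).
Proof.
move=> kn; have := e_prop kn; case: (e k) => [[i c2][j c]].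
rewrite /fr canon_ltE /lneg /=; case: c2; case: c => /=; lia.
Qed.

Lemma filter_pos x : x \in w -> filter (fun k => e k == x) (iota 0 n) = iota (lo x) (m x).
Proof.
move=> xw; apply: (irr_sorted_eq ltn_trans ltnn).
- by apply: sorted_filter; [exact: ltn_trans | exact: iota_ltn_sorted].
- exact: iota_ltn_sorted.
move=> k; rewrite mem_filter !mem_iota add0n /=; apply/idP/idP.
- move=> /andP[/eqP ex kn]; have hA := posA kn; have hB := posB kn.
  rewrite ex in hA hB; apply/andP; split; lia.
- move=> /andP[h1 h2]; have hr : k - lo x < m x by lia.
  have [qn he _] := posE xw hr; move: qn he; rewrite subnKC // => qn ->.
  by rewrite eqxx qn.
Qed.

Lemma count_rk x Q :
  count (fun k => (e k == x) && Q (rk k)) (iota 0 n) = count Q (iota 0 (m x)).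
Proof.
case: (boolP (x \in w)) => xw; last first.
  have -> : m x = 0 by apply/eqP; rewrite -leqn0 leqNgt m_pos.
  rewrite /= (@eq_in_count _ _ pred0) ?count_pred0 // => k.
  rewrite mem_iota add0n => /andP[_ kn] /=; case: eqP => // E.
  by move: xw; rewrite -E e_in.
have -> : count (fun k => (e k == x) && Q (rk k)) (iota 0 n) =
          count (fun k => Q (rk k)) (filter (fun k => e k == x) (iota 0 n)).
  by rewrite count_filter; apply: eq_count => k /=; rewrite andbC.
rewrite filter_pos // -[lo x]addn0 iotaDl count_map; apply: eq_in_count => r.
rewrite mem_iota add0n => /andP[_ rm] /=; have [_ _ ->] := posE xw rm; by [].
Qed.

Lemma sum_over (T : eqType) (s : seq T) N (G : nat -> pred T) (P : pred T) :
  (forall b, b \in s -> \sum_(1 <= i < N) (G i b : nat) = P b) ->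
  \sum_(1 <= i < N) count (G i) s = count P s.
Proof.
move=> H; under eq_bigr => i _ do rewrite -sum_count.
rewrite exchange_big /= -sum_count !big_seq; apply: eq_bigr => b bs; exact: H.
Qed.

Lemma sum_over2 (T : eqType) (s : seq T) N (G : nat -> nat -> pred T) (P : pred T) :
  (forall b, b \in s -> \sum_(1 <= i < N) \sum_(i.+1 <= j < N) (G i j b : nat) = P b) ->
  \sum_(1 <= i < N) \sum_(i.+1 <= j < N) count (G i j) s = count P s.
Proof.
move=> H; under eq_bigr => i _ do under eq_bigr => j _ do rewrite -sum_count.
under eq_bigr => i _ do rewrite exchange_big /=.
rewrite exchange_big /= -sum_count !big_seq; apply: eq_bigr => b bs; exact: H.
Qed.

Local Notation pi := (bottom_row (bst w)).

Lemma pi_atE k : k < n -> pi_at pi k.+1 = ((sig k).+1, (e k).2.2).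
Proof.
by move=> kn; rewrite /pi_at /bottom_row bst_eq /= (nth_map dflt) ?size_mkseq // nth_mkseq.
Qed.

Lemma c_sig k : k < n -> (e (sig k)).2.2 = (e k).2.2.
Proof. by move=> kn; have [_ -> _] := sig_props kn. Qed.

Lemma bnd_gt b : b \in w -> b.1.1 < bnd w /\ b.2.1 < bnd w.
Proof.
move=> bw; have := @leq_bigmax_seq _ w xpredT (fun b => maxn b.1.1 b.2.1) b bw isT.
rewrite /bnd !ltnS => H; split; apply: leq_trans H; [exact: leq_maxl | exact: leq_maxr].
Qed.


Lemma sum_iota (F : nat -> bool) : \sum_(1 <= j < n.+1) (F j : nat) = count (fun k => F k.+1) (iota 0 n).
Proof. by rewrite big_add1 /= -sum_count /index_iota subn0. Qed.

Lemma inBn : in_Bn n pi.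
Proof.
rewrite /in_Bn /bottom_row bst_eq /mkseq -!map_comp.
apply: uniq_perm; last first.
- move=> y; rewrite mem_iota; apply/mapP/idP => [[k]|hy].
    by rewrite mem_iota add0n => /andP[_ kn] -> /=; rewrite ltnS sig_lt.
  have hk : y.-1 < n by lia.
  exists (sig y.-1); first by rewrite mem_iota sig_lt.
  by rewrite /= sig_sig //; lia.
- exact: iota_uniq.
rewrite map_inj_in_uniq ?iota_uniq // => a b; rewrite !mem_iota !add0n /= => an bn [] E.
by rewrite -(sig_sig an) E sig_sig.
Qed.

Lemma isInv : is_involution n pi.
Proof.
move=> j /andP[j1 jn]; have kn : j.-1 < n by lia.
have -> : j = (j.-1).+1 by lia.
set k := j.-1 in kn *.
have hq := sig_lt kn; have hss := sig_sig kn.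
case: (eqVneq (sig k) k) => hs.
- case Hc: (e k).2.2.
  + by apply: Or42; rewrite /is_bfixed pi_atE // hs Hc.
  + by apply: Or41; rewrite /is_fixed pi_atE // hs Hc.
- case Hc: (e k).2.2.
  + apply: Or44; exists (sig k).+1; first by rewrite ltnS hq eqSS hs.
    by rewrite /is_b2cycle !pi_atE // Hc hss c_sig // Hc !eqxx.
  + apply: Or43; exists (sig k).+1; first by rewrite ltnS hq eqSS hs.
    by rewrite /is_2cycle !pi_atE // Hc hss c_sig // Hc !eqxx.
Qed.

Lemma pt1 (b : biletter) c0 N (R : bool) : b.1.2 = false -> 0 < b.1.1 < N ->
  \sum_(1 <= i < N) ((b == ((i,false),(i,c0))) && R : nat) = [&& b.2.2 == c0, b.1.1 == b.2.1 & R].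
Proof.
move=> hb hN; rewrite (@sum_eq1 _ _ b.1.1) => [|i]; last by case: (b =P ((i,false),(i,c0))) => [->|] //=.
rewrite hN; case: b hb hN => [[a1 a2][b1 b2]] /= -> _.
rewrite !xpair_eqE /= eqxx /=; case: b2; case: c0; case: R => /=; lia.
Qed.

Lemma pt0 (b : biletter) c0 N : b.1.2 = false -> 0 < b.1.1 < N ->
  \sum_(1 <= i < N) ((b == ((i,false),(i,c0))) : nat) = (b.2.2 == c0) && (b.1.1 == b.2.1).
Proof.
move=> hb hN; have := pt1 c0 true hb hN; rewrite andbT => <-.
by apply: eq_bigr => i _; rewrite andbT.
Qed.

Lemma pt2 (b : biletter) c0 N : b.1.2 = false -> 0 < b.1.1 < N -> b.2.1 < N ->
  \sum_(1 <= i < N) \sum_(i.+1 <= j < N) ((b == ((i,false),(j,c0))) : nat) =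
  (b.2.2 == c0) && (b.1.1 < b.2.1).
Proof.
move=> hb hN hN2; rewrite (@sum_eq1 _ _ b.1.1) => [|i]; last first.
  move=> H; apply/eqP; apply: contraNT H => ne; rewrite big1 // => j _.
  by case: (b =P ((i,false),(j,c0))) => // E; rewrite E /= eqxx in ne.
rewrite hN (@sum_eq1 _ _ b.2.1) => [|j]; last by case: (b =P ((b.1.1,false),(j,c0))) => [->|] //=.
rewrite hN2 andbT; case: b hb hN hN2 => [[a1 a2][b1 b2]] /= -> _ _.
rewrite !xpair_eqE /= !eqxx /=; case: ifP => _; case: b2; case: c0 => /=; lia.
Qed.

Lemma cnt_odd m0 : m0 - 2 * (m0 %/ 2) = count (fun r => 2 * r + 1 == m0) (iota 0 m0).
Proof.
have H := count_predUI (fun r => 2 * r + 1 < m0) (fun r => 2 * r + 1 == m0) (iota 0 m0).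
have E1 : count (fun r => 2 * r + 1 < m0) (iota 0 m0) = m0 %/ 2.
  have -> : count (fun r => 2 * r + 1 < m0) (iota 0 m0) = count (fun r => r < m0 %/ 2) (iota 0 m0).
    by apply: eq_count => r /=; lia.
  rewrite count_lt; lia.
have E2 : count (predU (fun r => 2 * r + 1 < m0) (fun r => 2 * r + 1 == m0)) (iota 0 m0) = (m0.+1) %/ 2.
  have -> : count (predU (fun r => 2 * r + 1 < m0) (fun r => 2 * r + 1 == m0)) (iota 0 m0) = count (fun r => r < m0.+1 %/ 2) (iota 0 m0).
    by apply: eq_count => r /=; lia.
  rewrite count_lt; lia.
have E3 : count (predI (fun r => 2 * r + 1 < m0) (fun r => 2 * r + 1 == m0)) (iota 0 m0) = 0.
  have -> : count (predI (fun r => 2 * r + 1 < m0) (fun r => 2 * r + 1 == m0)) (iota 0 m0) = count pred0 (iota 0 m0).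
    by apply: eq_count => r /=; lia.
  by rewrite count_pred0.
move: H; rewrite E1 E2 E3; lia.
Qed.

Lemma cnt_half m0 : m0 %/ 2 = count (fun r => 2 * r + 1 < m0) (iota 0 m0).
Proof.
have -> : count (fun r => 2 * r + 1 < m0) (iota 0 m0) = count (fun r => r < m0 %/ 2) (iota 0 m0).
  by apply: eq_count => r /=; lia.
rewrite count_lt; lia.
Qed.

Lemma b_odd x : m x - 2 * (m x %/ 2) =
  count (fun k => (e k == x) && (2 * rk k + 1 == m (e k))) (iota 0 n).
Proof.
rewrite cnt_odd -count_rk; apply: eq_count => k /=; by case: eqP => // ->.
Qed.

Lemma b_half x : m x %/ 2 =
  count (fun k => (e k == x) && (2 * rk k + 1 < m (e k))) (iota 0 n).
Proof.
rewrite cnt_half -count_rk; apply: eq_count => k /=; by case: eqP => // ->.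
Qed.

Lemma nfixed : n_fixed n pi = \sum_(1 <= i < bnd w) a_ w i.
Proof.
rewrite /n_fixed sum_iota /a_ /mult.
rewrite (@sum_over _ w (bnd w) (fun i b => b == ((i,false),(i,false)))
   (fun b => ~~ b.2.2 && (b.1.1 == b.2.1))); last first.
  move=> b bw; have [h1 _] := bnd_gt bw; case/and3P: (w_prop bw) => /eqP hb hp _.
  by rewrite pt0 // ?hp ?h1 //; case: b.2.2.
rewrite count_w; apply: eq_in_count => k; rewrite mem_iota add0n => /andP[_ kn] /=.
rewrite /is_fixed pi_atE // xpair_eqE eqSS sig_fix // fr_eqE //.
by case: (e k).2.2; rewrite /= ?andbF ?andbT.
Qed.

Lemma nbfixed : n_bfixed n pi = \sum_(1 <= i < bnd w) (b_ w i - 2 * (b_ w i %/ 2)).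
Proof.
rewrite /n_bfixed sum_iota.
have -> : \sum_(1 <= i < bnd w) (b_ w i - 2 * (b_ w i %/ 2)) =
  \sum_(1 <= i < bnd w) count (fun k => (e k == ((i,false),(i,true))) && (2 * rk k + 1 == m (e k))) (iota 0 n).
  by apply: eq_bigr => i _; exact: b_odd.
rewrite (@sum_over _ (iota 0 n) (bnd w)
  (fun i k => (e k == ((i,false),(i,true))) && (2 * rk k + 1 == m (e k)))
  (fun k => [&& (e k).2.2 == true, (e k).1.1 == (e k).2.1 & 2 * rk k + 1 == m (e k)])); last first.
  move=> k; rewrite mem_iota add0n => /andP[_ kn]; have [h1 _] := bnd_gt (e_in kn).
  case/and3P: (e_prop kn) => /eqP hb hp _.
  by rewrite pt1 // hp h1.
apply: eq_in_count => k; rewrite mem_iota add0n => /andP[_ kn] /=.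
rewrite /is_bfixed pi_atE // xpair_eqE eqSS sig_fix // fr_eqE //.
have hB := posB kn; case: (e k).2.2 => /=; last by rewrite !andbF.
rewrite andbT; congr andb; apply/eqP/eqP; lia.
Qed.

Lemma innerc k c0 : k < n ->
  \sum_(k.+2 <= l < n.+1) ((pi_at pi k.+1 == (l,c0)) && (pi_at pi l == (k.+1,c0)) : nat) =
  (k < sig k) && ((e k).2.2 == c0).
Proof.
move=> kn; rewrite (@sum_eq1 _ _ (sig k).+1) => [|l]; last first.
  by rewrite pi_atE // xpair_eqE; case: ((sig k).+1 =P l) => [->|] //=.
rewrite !ltnS (sig_lt kn) andbT !pi_atE ?sig_lt // sig_sig // c_sig // !xpair_eqE !eqxx /=.
by case: ifP => _ //=; rewrite andbb.
Qed.

Lemma sum_iota2 (G : nat -> nat -> nat) :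
  \sum_(1 <= k < n.+1) \sum_(k.+1 <= l < n.+1) G k l =
  \sum_(k <- iota 0 n) \sum_(k.+2 <= l < n.+1) G k.+1 l.
Proof. by rewrite big_add1 /= /index_iota subn0. Qed.

Lemma n2c : n_2cycles n pi = \sum_(1 <= i < bnd w) \sum_(i.+1 <= j < bnd w) c_ w i j.
Proof.
rewrite /n_2cycles sum_iota2.
rewrite (eq_big_seq (fun k => ((k < sig k) && ((e k).2.2 == false) : nat))); last first.
  by move=> k; rewrite mem_iota add0n => /andP[_ kn]; exact: innerc.
rewrite sum_count /c_ /mult (@sum_over2 _ w (bnd w) (fun i j b => b == ((i,false),(j,false)))
   (fun b => (b.2.2 == false) && (b.1.1 < b.2.1))); last first.
  move=> b bw; have [h1 h2] := bnd_gt bw; case/and3P: (w_prop bw) => /eqP hb hp _.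
  by rewrite pt2 // ?hp ?h1.
rewrite count_w; apply: eq_in_count => k; rewrite mem_iota add0n => /andP[_ kn] /=.
rewrite sig_gt // lt_frE // fr_eqE //.
by case: (e k).2.2; rewrite /= ?andbF ?andbT ?orbF.
Qed.

Lemma nb2c : n_b2cycles n pi = \sum_(1 <= i < bnd w) \sum_(i.+1 <= j < bnd w) d_ w i j
                    + \sum_(1 <= i < bnd w) (b_ w i %/ 2).
Proof.
rewrite /n_b2cycles sum_iota2.
rewrite (eq_big_seq (fun k => ((k < sig k) && ((e k).2.2 == true) : nat))); last first.
  by move=> k; rewrite mem_iota add0n => /andP[_ kn]; exact: innerc.
rewrite sum_count /d_ /mult (@sum_over2 _ w (bnd w) (fun i j b => b == ((i,false),(j,true)))
   (fun b => (b.2.2 == true) && (b.1.1 < b.2.1))); last first.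
  move=> b bw; have [h1 h2] := bnd_gt bw; case/and3P: (w_prop bw) => /eqP hb hp _.
  by rewrite pt2 // ?hp ?h1.
have -> : \sum_(1 <= i < bnd w) (b_ w i %/ 2) =
  \sum_(1 <= i < bnd w) count (fun k => (e k == ((i,false),(i,true))) && (2 * rk k + 1 < m (e k))) (iota 0 n).
  by apply: eq_bigr => i _; exact: b_half.
rewrite (@sum_over _ (iota 0 n) (bnd w)
  (fun i k => (e k == ((i,false),(i,true))) && (2 * rk k + 1 < m (e k)))
  (fun k => [&& (e k).2.2 == true, (e k).1.1 == (e k).2.1 & 2 * rk k + 1 < m (e k)])); last first.
  move=> k; rewrite mem_iota add0n => /andP[_ kn]; have [h1 _] := bnd_gt (e_in kn).
  case/and3P: (e_prop kn) => /eqP hb hp _.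
  by rewrite pt1 // hp h1.
rewrite count_w; apply: count_split3 => k; rewrite mem_iota add0n => /andP[_ kn] /=.
rewrite sig_gt // lt_frE // fr_eqE //.
have hB := posB kn; case: (e k).2.2 => /=; last by rewrite !andbF.
rewrite !andbT; move: hB; move: ((e k).1.1) ((e k).2.1) (rk k) (rk2 k) (m (e k)) => a b x y z; lia.
Qed.
End Main.

Theorem lemma5 (w : seq biletter) :
  colored_involution w ->
  let n := size w in
  let pi := bottom_row (bst w) in
  let N := bnd w in
  in_Bn n pi /\ is_involution n pi /\
  n_fixed n pi = \sum_(1 <= i < N) a_ w i /\
  n_bfixed n pi = \sum_(1 <= i < N) (b_ w i - 2 * (b_ w i %/ 2)) /\
  n_2cycles n pi = \sum_(1 <= i < N) \sum_(i.+1 <= j < N) c_ w i j /\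
  n_b2cycles n pi = \sum_(1 <= i < N) \sum_(i.+1 <= j < N) d_ w i j
                    + \sum_(1 <= i < N) (b_ w i %/ 2).
Proof.
move=> H /=.
split; first exact: inBn.
split; first exact: isInv.
split; first exact: nfixed.
split; first exact: nbfixed.
split; first exact: n2c.
exact: nb2c.
Qed.
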